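(* Consider the equation $u_{tx}=u-i|u|^2u_x$. Let $k,\Omega,c\in\mathbb{R}$ with $c\neq0$, and let $\varphi,\theta:\mathbb{R}\to\mathbb{R}$ be smooth with $\varphi(y)\neq0$ for all $y$. Suppose $u(x,t)=\varphi(y)e^{i(kx-\Omega t+\theta(y))}$, $y=x-ct$, solves this equation. Then there exist constants $A,B\in\mathbb{R}$ such that $$\theta_y=\frac{\varphi^4-2ck\varphi^2-2\Omega\varphi^2+4A}{4c\varphi^2}$$ and $$\varphi_y^2=-\frac{1}{16c^2}V(\varphi),\qquad V(\varphi)=\frac{\varphi^8+c_3\varphi^6+c_2\varphi^4+c_1\varphi^2+c_0}{\varphi^2},$$ where $c_3=4ck-4\Omega$, $c_2=4\left(c^2k^2+\Omega^2+2A+c(4-2k\Omega)\right)$, $c_1=-32Bc$, $c_0=16A^2$. *)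

(* Defs.v *)
From Stdlib Require Import Reals.
Open Scope R_scope.

Definition smooth (f : R -> R) : Prop :=
  exists D : nat -> R -> R,
    D O = f /\ forall (n : nat) (x : R), derivable_pt_lim (D n) x (D (S n) x).

(* Complex numbers are represented by pairs (real part, imaginary part).
   For u = a + i b, the equation u_tx = u - i |u|^2 u_x reads
     a_tx = a + (a^2 + b^2) b_x,
     b_tx = b - (a^2 + b^2) a_x.
   [solves_eq a b] says the function u(x,t) = a(x,t) + i b(x,t) has the
   partial derivatives u_x, u_t, u_tx := d/dx (d/dt u) everywhere and
   satisfies the equation. *)
Definition solves_eq (a b : R -> R -> R) : Prop :=
  exists ax bx at_ bt atx btx : R -> R -> R,
    (forall x t, derivable_pt_lim (fun z => a z t) x (ax x t)) /\
    (forall x t, derivable_pt_lim (fun z => b z t) x (bx x t)) /\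
    (forall x t, derivable_pt_lim (fun s => a x s) t (at_ x t)) /\
    (forall x t, derivable_pt_lim (fun s => b x s) t (bt x t)) /\
    (forall x t, derivable_pt_lim (fun z => at_ z t) x (atx x t)) /\
    (forall x t, derivable_pt_lim (fun z => bt z t) x (btx x t)) /\
    (forall x t, atx x t = a x t + (a x t ^ 2 + b x t ^ 2) * bx x t) /\
    (forall x t, btx x t = b x t - (a x t ^ 2 + b x t ^ 2) * ax x t).

Definition Vpot (c k Om A B p : R) : R :=
  let c3 := 4 * c * k - 4 * Om in
  let c2 := 4 * (c ^ 2 * k ^ 2 + Om ^ 2 + 2 * A + c * (4 - 2 * k * Om)) in
  let c1 := - 32 * B * c in
  let c0 := 16 * A ^ 2 in
  (p ^ 8 + c3 * p ^ 6 + c2 * p ^ 4 + c1 * p ^ 2 + c0) / p ^ 2.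

(* Main.v *)
Require Import Defs.
From Stdlib Require Import Reals Lra.
Open Scope R_scope.

Lemma Dset f x l l' : derivable_pt_lim f x l' -> l' = l -> derivable_pt_lim f x l.
Proof. intros H e; subst; exact H. Qed.
Lemma Dmul f g x a b l : derivable_pt_lim f x a -> derivable_pt_lim g x b ->
  l = a * g x + f x * b -> derivable_pt_lim (fun z => f z * g z) x l.
Proof. intros Hf Hg e; subst. apply (derivable_pt_lim_mult f g x a b Hf Hg). Qed.
Lemma Dadd f g x a b l : derivable_pt_lim f x a -> derivable_pt_lim g x b ->
  l = a + b -> derivable_pt_lim (fun z => f z + g z) x l.
Proof. intros Hf Hg e; subst. apply (derivable_pt_lim_plus f g x a b Hf Hg). Qed.
Lemma Dsub f g x a b l : derivable_pt_lim f x a -> derivable_pt_lim g x b ->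
  l = a - b -> derivable_pt_lim (fun z => f z - g z) x l.
Proof. intros Hf Hg e; subst. apply (derivable_pt_lim_minus f g x a b Hf Hg). Qed.
Lemma Ddiv f g x a b l : derivable_pt_lim f x a -> derivable_pt_lim g x b -> g x <> 0 ->
  l = (a * g x - b * f x) / (g x)^2 -> derivable_pt_lim (fun z => f z / g z) x l.
Proof. intros Hf Hg Hn e; subst.
  eapply Dset. apply (derivable_pt_lim_div f g x a b Hf Hg Hn). unfold Rsqr; simpl; field; auto. Qed.
Lemma Dopp f x a l : derivable_pt_lim f x a -> l = - a -> derivable_pt_lim (fun z => - f z) x l.
Proof. intros Hf e; subst. apply (derivable_pt_lim_opp f x a Hf). Qed.
Lemma Dcomp f g g' x a l : derivable_pt_lim f x a -> (forall y, derivable_pt_lim g y (g' y)) ->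
  l = g' (f x) * a -> derivable_pt_lim (fun z => g (f z)) x l.
Proof. intros Hf Hg e; subst. apply (derivable_pt_lim_comp f g x a _ Hf (Hg _)). Qed.
Lemma Dcos f x a l : derivable_pt_lim f x a -> l = - sin (f x) * a -> derivable_pt_lim (fun z => cos (f z)) x l.
Proof. intros Hf e. apply (Dcomp f cos (fun y => - sin y) x a l Hf). apply derivable_pt_lim_cos. exact e. Qed.
Lemma Dsin f x a l : derivable_pt_lim f x a -> l = cos (f x) * a -> derivable_pt_lim (fun z => sin (f z)) x l.
Proof. intros Hf e. apply (Dcomp f sin cos x a l Hf). apply derivable_pt_lim_sin. exact e. Qed.
Lemma Dpow f x a n l : derivable_pt_lim f x a -> l = INR n * f x ^ pred n * a ->
  derivable_pt_lim (fun z => f z ^ n) x l.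
Proof. intros Hf e. apply (Dcomp f (fun y => y ^ n) (fun y => INR n * y ^ pred n) x a l Hf). intro; apply derivable_pt_lim_pow. exact e. Qed.
Lemma Did x l : l = 1 -> derivable_pt_lim (fun z => z) x l.
Proof. intros e; subst. apply derivable_pt_lim_id. Qed.
Lemma Dconst k x l : l = 0 -> derivable_pt_lim (fun _ => k) x l.
Proof. intros e; subst. apply derivable_pt_lim_const. Qed.

Ltac dstep P HP :=
  match goal with
  | |- derivable_pt_lim (fun _ => ?K) _ _ => eapply (Dconst K)
  | |- derivable_pt_lim (fun z => z) _ _ => eapply Did
  | |- derivable_pt_lim (fun z => P ?n (@?f z)) _ _ => eapply (Dcomp f (P n) (P (S n))); [ | exact (HP n) | ]
  | |- derivable_pt_lim (fun z => @?f z * @?g z) _ _ => eapply (Dmul f g)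
  | |- derivable_pt_lim (fun z => @?f z / @?g z) _ _ => eapply (Ddiv f g)
  | |- derivable_pt_lim (fun z => @?f z + @?g z) _ _ => eapply (Dadd f g)
  | |- derivable_pt_lim (fun z => @?f z - @?g z) _ _ => eapply (Dsub f g)
  | |- derivable_pt_lim (fun z => - @?f z) _ _ => eapply (Dopp f)
  | |- derivable_pt_lim (fun z => cos (@?f z)) _ _ => eapply (Dcos f)
  | |- derivable_pt_lim (fun z => sin (@?f z)) _ _ => eapply (Dsin f)
  | |- derivable_pt_lim (fun z => @?f z ^ ?n) _ _ => eapply (Dpow f _ _ n)
  end.

Lemma const0 f : (forall x, derivable_pt_lim f x 0) -> forall x, f x = f 0.
Proof.
  intros H x.
  assert (pr : derivable f) by (intro y; exists 0; apply H).
  apply (null_derivative_1 f pr).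
  intro y. unfold derive_pt. destruct (pr y) as [l Hl]. simpl.
  eapply uniqueness_limite; [exact Hl | apply H].
Qed.

Theorem mainTheorem4 (k Om c : R) (phi theta : R -> R) :
  c <> 0 ->
  smooth phi -> smooth theta ->
  (forall y, phi y <> 0) ->
  solves_eq
    (fun x t => phi (x - c * t) * cos (k * x - Om * t + theta (x - c * t)))
    (fun x t => phi (x - c * t) * sin (k * x - Om * t + theta (x - c * t))) ->
  exists A B : R,
    (forall y,
       derivable_pt_lim theta y
         ((phi y ^ 4 - 2 * c * k * phi y ^ 2 - 2 * Om * phi y ^ 2 + 4 * A)
            / (4 * c * phi y ^ 2))) /\
    (forall y dphi, derivable_pt_lim phi y dphi ->
       dphi ^ 2 = - (1 / (16 * c ^ 2)) * Vpot c k Om A B (phi y)).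
Proof.
  intros Hc [P [HP0 HP]] [Q [HQ0 HQ]] Hnz Hsol. subst phi theta.
  destruct Hsol as (ax & bx & at_ & bt & atx & btx & Hax & Hbx & Hat & Hbt & Hatx & Hbtx & E1 & E2).
  cbv beta in *.
  Ltac dd P Q HP HQ := eapply Dset; [ repeat (dstep P HP || dstep Q HQ); try reflexivity; try reflexivity | ].
  assert (Fax : forall z, ax z 0 = P 1%nat z * cos (k*z + Q 0%nat z) - P 0%nat z * sin (k*z + Q 0%nat z) * (k + Q 1%nat z)).
  { intro z. eapply uniqueness_limite; [apply (Hax z 0) |].
    dd P Q HP HQ. rewrite ?Rmult_0_r, ?Rminus_0_r; ring. }
  assert (Fbx : forall z, bx z 0 = P 1%nat z * sin (k*z + Q 0%nat z) + P 0%nat z * cos (k*z + Q 0%nat z) * (k + Q 1%nat z)).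
  { intro z. eapply uniqueness_limite; [apply (Hbx z 0) |].
    dd P Q HP HQ. rewrite ?Rmult_0_r, ?Rminus_0_r; ring. }
  assert (Fat : forall z, at_ z 0 = - c * P 1%nat z * cos (k*z + Q 0%nat z) + P 0%nat z * sin (k*z + Q 0%nat z) * (Om + c * Q 1%nat z)).
  { intro z. eapply uniqueness_limite; [apply (Hat z 0) |].
    dd P Q HP HQ. rewrite ?Rmult_0_r, ?Rminus_0_r; ring. }
  assert (Fbt : forall z, bt z 0 = - c * P 1%nat z * sin (k*z + Q 0%nat z) - P 0%nat z * cos (k*z + Q 0%nat z) * (Om + c * Q 1%nat z)).
  { intro z. eapply uniqueness_limite; [apply (Hbt z 0) |].
    dd P Q HP HQ. rewrite ?Rmult_0_r, ?Rminus_0_r; ring. }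
  assert (Fatx : forall x, atx x 0 =
     - c * P 2%nat x * cos (k*x + Q 0%nat x) + c * P 1%nat x * sin (k*x + Q 0%nat x) * (k + Q 1%nat x)
     + P 1%nat x * sin (k*x + Q 0%nat x) * (Om + c * Q 1%nat x)
     + P 0%nat x * cos (k*x + Q 0%nat x) * (k + Q 1%nat x) * (Om + c * Q 1%nat x)
     + P 0%nat x * sin (k*x + Q 0%nat x) * (c * Q 2%nat x)).
  { intro x. eapply uniqueness_limite.
    { eapply derivable_pt_lim_ext; [ | apply (Hatx x 0)]. intro z; apply Fat. }
    dd P Q HP HQ. ring. }
  assert (Fbtx : forall x, btx x 0 =
     - c * P 2%nat x * sin (k*x + Q 0%nat x) - c * P 1%nat x * cos (k*x + Q 0%nat x) * (k + Q 1%nat x)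
     - P 1%nat x * cos (k*x + Q 0%nat x) * (Om + c * Q 1%nat x)
     + P 0%nat x * sin (k*x + Q 0%nat x) * (k + Q 1%nat x) * (Om + c * Q 1%nat x)
     - P 0%nat x * cos (k*x + Q 0%nat x) * (c * Q 2%nat x)).
  { intro x. eapply uniqueness_limite.
    { eapply derivable_pt_lim_ext; [ | apply (Hbtx x 0)]. intro z; apply Fbt. }
    dd P Q HP HQ. ring. }
  assert (EQ : forall x,
    let p0 := P 0%nat x in let p1 := P 1%nat x in let p2 := P 2%nat x in
    let q1 := Q 1%nat x in let q2 := Q 2%nat x in
    -c*p2 + c*p0*q1^2 + (Om + c*k)*p0*q1 + k*Om*p0 - p0 - p0^3*q1 - k*p0^3 = 0 /\
    -c*(2*p1*q1 + p0*q2) - (Om + c*k)*p1 + p0^2*p1 = 0).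
  { intro x. cbv zeta.
    pose proof (E1 x 0) as e1. pose proof (E2 x 0) as e2.
    rewrite ?Rmult_0_r, ?Rminus_0_r in e1, e2.
    rewrite Fatx, Fbx in e1. rewrite Fbtx, Fax in e2.
    set (C := cos (k * x + Q 0%nat x)) in *. set (S := sin (k * x + Q 0%nat x)) in *.
    assert (H1 : C^2 + S^2 = 1). { unfold C, S. pose proof (sin2_cos2 (k * x + Q 0%nat x)). unfold Rsqr in H. simpl. lra. }
    assert (Hu : (P 0%nat x * C) ^ 2 + (P 0%nat x * S) ^ 2 = P 0%nat x ^ 2).
    { replace (P 0%nat x ^ 2) with (P 0%nat x ^ 2 * (C^2+S^2)) by (rewrite H1; ring). ring. }
    rewrite Hu in e1, e2.
    match type of e1 with ?l1 = ?r1 => match type of e2 with ?l2 = ?r2 =>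
      assert (z1 : l1 - r1 = 0) by lra; assert (z2 : l2 - r2 = 0) by lra;
      split;
      [ match goal with |- ?X = 0 => replace X with (X * (C^2+S^2)) by (rewrite H1; ring);
          transitivity (C*(l1-r1) + S*(l2-r2)); [ring | rewrite z1, z2; ring] end
      | match goal with |- ?X = 0 => replace X with (X * (C^2+S^2)) by (rewrite H1; ring);
          transitivity (C*(l2-r2) - S*(l1-r1)); [ring | rewrite z1, z2; ring] end ]
    end end. }
  pose (F := fun z => - c * (P 0%nat z * P 0%nat z * Q 1%nat z) - (Om + c*k) * (P 0%nat z * P 0%nat z) * (/ 2)
                      + P 0%nat z ^ 4 * (/ 4)).
  assert (Fc : forall z, F z = F 0).
  { apply const0. intro z. unfold F. dd P Q HP HQ.
    destruct (EQ z) as [_ HY]; cbv zeta in HY.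
    transitivity (P 0%nat z * (- c * (2 * P 1%nat z * Q 1%nat z + P 0%nat z * Q 2%nat z) - (Om + c * k) * P 1%nat z + P 0%nat z ^ 2 * P 1%nat z)).
    - simpl. field.
    - rewrite HY; ring. }
  pose (A := - F 0).
  assert (Hq : forall y, Q 1%nat y = (P 0%nat y ^ 4 - 2 * c * k * P 0%nat y ^ 2 - 2 * Om * P 0%nat y ^ 2 + 4 * A)
        / (4 * c * P 0%nat y ^ 2)).
  { intro y. pose proof (Fc y) as fy. unfold A. rewrite <- fy. unfold F. field.
    split; [apply Hnz | exact Hc]. }
  pose (H := fun z => 16 * c^2 * (P 1%nat z * P 1%nat z) + P 0%nat z ^ 6 + (4 * c * k - 4 * Om) * P 0%nat z ^ 4
      + 4 * (c ^ 2 * k ^ 2 + Om ^ 2 + 2 * A + c * (4 - 2 * k * Om)) * P 0%nat z ^ 2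
      + 16 * A ^ 2 / P 0%nat z ^ 2).
  assert (Hcst : forall z, H z = H 0).
  { apply const0. intro z. unfold H.
    eapply Dset; [ repeat (dstep P HP || dstep Q HQ); try reflexivity; try reflexivity;
       try (apply pow_nonzero; apply Hnz) | ].
    destruct (EQ z) as [HX _]; cbv zeta in HX.
    assert (hp2 : P 2%nat z = (c * P 0%nat z * Q 1%nat z ^ 2 + (Om + c * k) * P 0%nat z * Q 1%nat z + k * Om * P 0%nat z - P 0%nat z -
       P 0%nat z ^ 3 * Q 1%nat z - k * P 0%nat z ^ 3) / c).
    { apply (Rmult_eq_reg_l c); [ | exact Hc]. field_simplify; [lra | exact Hc]. }
    rewrite hp2, Hq. simpl. field. split; [apply Hnz | exact Hc]. }
  exists A, (H 0 / (32 * c)). split.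
  - intro y. eapply Dset; [apply HQ | ]. apply Hq.
  - intros y dphi Hd. rewrite (uniqueness_limite _ _ _ _ Hd (HP 0%nat y)).
    unfold Vpot. rewrite <- (Hcst y). unfold H. field.
    split; [apply Hnz | exact Hc].
Qed.
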